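(* Let $D$ be a finite set and $P:D^2\to\{0,1\}$ a binary predicate such that for any two-element subsets $B,C\subseteq D$, the restriction $P|_{B\times C}$ is not a singleton. Then for every $0<\varepsilon<1$ and every instance $I$ of $\mathrm{CSP}(P)$ on $n$ variables there is an $\varepsilon$-sparsifier of $I$ with $O(\varepsilon^{-2}n)$ constraints, where the implied constant does not depend on $I$, $n$ or $\varepsilon$.
   Context: A binary CSP instance is $I=(V,D,\Pi,w)$ where $V$ is a finite set of $n=|V|$ variables, $D$ a finite domain, $\Pi$ a set of constraints, each a pair $\langle (u,v),P\rangle$ with $u,v\in V$ distinct and $P:D^2\to\{0,1\}$, and $w:\Pi\to\mathbb{R}_{>0}$ positive weights. $\mathrm{CSP}(P)$ is the class of instances in which every constraint uses the predicate $P$. For an assignment $A:V\to D$, $\mathrm{Val}_I(A)=\sum_{\pi=\langle(u,v),P\rangle\in\Pi} w(\pi)P(A(u),A(v))$. For $0<\varepsilon<1$, an $\varepsilon$-sparsifier of $I$ is an instance $I_\varepsilon=(V,D,\Pi_\varepsilon,w_\varepsilon)$ with $\Pi_\varepsilon\subseteq\Pi$ and $w_\varepsilon:\Pi_\varepsilon\to\mathbb{R}_{>0}$ such that for every $A:V\to D$, $(1-\varepsilon)\mathrm{Val}_I(A)\le \mathrm{Val}_{I_\varepsilon}(A)\le(1+\varepsilon)\mathrm{Val}_I(A)$; its number of constraints is $|\Pi_\varepsilon|$. A predicate is a singleton if exactly one tuple is mapped to $1$. $P|_{B\times C}$ denotes the restriction of $P$ to $B\times C$. *)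

(* Defs.v *)
From mathcomp Require Import all_boot all_order all_algebra.
From mathcomp Require Import reals.
Set Implicit Arguments. Unset Strict Implicit. Unset Printing Implicit Defensive.
Import Order.TTheory GRing.Theory Num.Theory.
Local Open Scope ring_scope.

Definition binpred (D : finType) := D -> D -> bool.

Definition restr_singleton (D : finType) (P : binpred D) (B C : {set D}) : bool :=
  #|[set bc in setX B C | P bc.1 bc.2]| == 1%N.

(* An instance of CSP(P) on variable set V: since every constraint uses the
   same predicate P, a constraint <(u,v),P> is identified with the ordered
   pair (u,v), u <> v.  Pi is the set of constraints, w the weights
   (only the values on Pi matter, and they must be positive). *)
Definition wf_instance (R : realType) (V : finType)
  (Pi : {set V * V}) (w : V * V -> R) : Prop :=
  (forall c, c \in Pi -> c.1 != c.2) /\ (forall c, c \in Pi -> 0 < w c).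

Definition Val (R : realType) (V D : finType) (P : binpred D)
  (Pi : {set V * V}) (w : V * V -> R) (A : V -> D) : R :=
  \sum_(c in Pi) w c * (P (A c.1) (A c.2))%:R.

Definition is_sparsifier (R : realType) (V D : finType) (P : binpred D)
  (Pi : {set V * V}) (w : V * V -> R) (eps : R)
  (Pi' : {set V * V}) (w' : V * V -> R) : Prop :=
  Pi' \subset Pi /\ (forall c, c \in Pi' -> 0 < w' c) /\
  forall A : V -> D,
    (1 - eps) * Val P Pi w A <= Val P Pi' w' A /\
    Val P Pi' w' A <= (1 + eps) * Val P Pi w A.

(* Main.v *)
Require Import Defs.
From mathcomp Require Import all_boot all_order all_algebra.
From mathcomp Require Import reals.
From mathcomp Require Import ring lra.
Set Implicit Arguments. Unset Strict Implicit. Unset Printing Implicit Defensive.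
Import Order.TTheory GRing.Theory Num.Theory.
Local Open Scope ring_scope.

(* Proof strategy: the predicate P is written as a sum of
   squares of "f(a) + g(b)" forms (Section SOS), so that Val is a quadratic
   form in the one-hot encoding of assignments; the instance then becomes a
   sum of PSD (Gram) matrices, which is sparsified by a Batson-Spielman-
   Srivastava barrier argument (Section Core, BSS), after reducing to a basis
   where the total matrix is positive definite (reduce). *)

Section Core.
Variable R : realFieldType.
Variable r : nat.
Implicit Types (M N S X : 'M[R]_r) (x y z : 'rV[R]_r).


Lemma e00D (A B : 'M[R]_1) : (A + B) 0 0 = A 0 0 + B 0 0. Proof. by rewrite !mxE. Qed.
Lemma e00B (A B : 'M[R]_1) : (A - B) 0 0 = A 0 0 - B 0 0. Proof. by rewrite !mxE. Qed.
Lemma e00N (A : 'M[R]_1) : (- A) 0 0 = - A 0 0. Proof. by rewrite !mxE. Qed.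
Lemma e00Z a (A : 'M[R]_1) : (a *: A) 0 0 = a * A 0 0. Proof. by rewrite !mxE. Qed.
Lemma e00T (A : 'M[R]_1) : A^T 0 0 = A 0 0. Proof. by rewrite !mxE. Qed.

Definition bf M x y : R := (x *m M *m y^T) 0 0.
Definition qf M x : R := bf M x x.
Definition psd M := forall x, 0 <= qf M x.
Definition pd M := forall x, x != 0 -> 0 < qf M x.
Definition symm M := M^T = M.

Lemma bfDl M N x y : bf (M + N) x y = bf M x y + bf N x y.
Proof. by rewrite /bf mulmxDr mulmxDl e00D. Qed.
Lemma bfBl M N x y : bf (M - N) x y = bf M x y - bf N x y.
Proof. by rewrite /bf mulmxBr mulmxBl e00B. Qed.
Lemma bfZl a M x y : bf (a *: M) x y = a * bf M x y.
Proof. by rewrite /bf -scalemxAr -scalemxAl e00Z. Qed.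
Lemma bfDr M x y z : bf M x (y + z) = bf M x y + bf M x z.
Proof. rewrite /bf; have ->: (y + z)^T = y^T + z^T by rewrite linearD. by rewrite mulmxDr e00D. Qed.
Lemma bfDm M x y z : bf M (y + z) x = bf M y x + bf M z x.
Proof. by rewrite /bf !mulmxDl e00D. Qed.
Lemma bfZr a M x y : bf M x (a *: y) = a * bf M x y.
Proof. rewrite /bf; have ->: (a *: y)^T = a *: y^T by rewrite linearZ. by rewrite -scalemxAr e00Z. Qed.
Lemma bfZm a M x y : bf M (a *: x) y = a * bf M x y.
Proof. by rewrite /bf -!scalemxAl e00Z. Qed.
Lemma bfNr M x y : bf M x (- y) = - bf M x y.
Proof. by rewrite -scaleN1r bfZr mulN1r. Qed.
Lemma bfNm M x y : bf M (- x) y = - bf M x y.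
Proof. by rewrite -scaleN1r bfZm mulN1r. Qed.
Lemma bfBr M x y z : bf M x (y - z) = bf M x y - bf M x z.
Proof. by rewrite bfDr bfNr. Qed.
Lemma bfBm M x y z : bf M (y - z) x = bf M y x - bf M z x.
Proof. by rewrite bfDm bfNm. Qed.
Lemma bf_sum (I : finType) (F : I -> 'M[R]_r) x y :
  bf (\sum_i F i) x y = \sum_i bf (F i) x y.
Proof.
rewrite /bf. rewrite mulmx_sumr mulmx_suml summxE. by [].
Qed.
Lemma bfC M x y : symm M -> bf M x y = bf M y x.
Proof.
move=> sM; rewrite /bf.
rewrite -[in RHS](trmxK (y *m M *m x^T)) e00T !trmx_mul !trmxK sM mulmxA.
by [].
Qed.
Lemma bf0l M y : bf M 0 y = 0.
Proof. by rewrite /bf !mul0mx mxE. Qed.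
Lemma bf0r M y : bf M y 0 = 0.
Proof. by rewrite /bf trmx0 mulmx0 mxE. Qed.
Lemma bf_mul M N x y : bf (M *m N) x y = bf N (x *m M) y.
Proof. by rewrite /bf mulmxA. Qed.
Lemma bf_mulr M N x y : symm N -> bf (M *m N) x y = bf M x (y *m N).
Proof. by move=> sN; rewrite /bf trmx_mul sN !mulmxA. Qed.
Lemma bf1 x y : bf 1%:M x y = (x *m y^T) 0 0.
Proof. by rewrite /bf mulmx1. Qed.



Lemma qfDl M N x : qf (M + N) x = qf M x + qf N x. Proof. exact: bfDl. Qed.
Lemma qfBl M N x : qf (M - N) x = qf M x - qf N x. Proof. exact: bfBl. Qed.
Lemma qfZl a M x : qf (a *: M) x = a * qf M x. Proof. exact: bfZl. Qed.
Lemma qf_sum (I : finType) (F : I -> 'M[R]_r) x :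
  qf (\sum_i F i) x = \sum_i qf (F i) x.
Proof. exact: bf_sum. Qed.
Lemma qf0 M : qf M 0 = 0. Proof. exact: bf0l. Qed.

Lemma pd_unit M : pd M -> M \in unitmx.
Proof.
move=> pM; rewrite -row_free_unit; apply: inj_row_free => v vM0.
apply/eqP; apply/negPn/negP=> nz; have := pM v nz.
by rewrite /qf /bf vM0 !mul0mx mxE ltxx.
Qed.

Lemma symm_inv M : symm M -> symm (invmx M).
Proof. by rewrite /symm trmx_inv => ->. Qed.

Lemma qf_inv M : symm M -> M \in unitmx ->
  forall x, qf (invmx M) x = qf M (x *m invmx M).
Proof.
move=> sM uM x; rewrite /qf /bf trmx_mul (symm_inv sM).
by rewrite mulmxKV // !mulmxA.
Qed.

Lemma bf_inv M x y : symm M -> M \in unitmx -> bf M y (x *m invmx M) = (y *m x^T) 0 0.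
Proof.
move=> sM uM; rewrite /bf trmx_mul -mulmxA.
have ->: M *m ((invmx M)^T *m x^T) = x^T.
  by rewrite trmx_inv sM mulmxA mulmxV ?mul1mx.
by [].
Qed.

Lemma pd_inv M : symm M -> pd M -> pd (invmx M).
Proof.
move=> sM pM x nz; have uM := pd_unit pM.
rewrite qf_inv //; apply: pM; apply/eqP => h; move/eqP: nz; apply.
by rewrite -(mulmxKV uM x) h mul0mx.
Qed.

Lemma pd_psd M : pd M -> psd M.
Proof.
move=> pM x; have [->|nz] := eqVneq x 0; first by rewrite qf0.
exact/ltW/pM.
Qed.

Lemma psd_congr S Z : psd S -> psd (Z *m S *m Z^T).
Proof.
move=> pS x; have := pS (x *m Z).
by rewrite /qf /bf trmx_mul !mulmxA.
Qed.

Lemma qf_congr S Z x : qf (Z *m S *m Z^T) x = qf S (x *m Z).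
Proof. by rewrite /qf /bf trmx_mul !mulmxA. Qed.

Definition lemx M N := psd (N - M).

Lemma lemx_qf M N x : lemx M N -> qf M x <= qf N x.
Proof. by move=> h; have := h x; rewrite qfBl subr_ge0. Qed.

Lemma lemx_congr M N Z : lemx M N -> lemx (Z *m M *m Z^T) (Z *m N *m Z^T).
Proof.
move=> h; rewrite /lemx -mulmxBl -mulmxBr; exact: psd_congr.
Qed.

Lemma symm_congr S Z : symm S -> symm (Z *m S *m Z^T).
Proof. by move=> sS; rewrite /symm !trmx_mul trmxK sS mulmxA. Qed.

Lemma variational M x y : symm M -> psd M -> M \in unitmx ->
  2 * (y *m x^T) 0 0 - qf M y <= qf (invmx M) x.
Proof.
move=> sM pM uM; have := pM (y - x *m invmx M).
rewrite /qf bfBm !bfBr -/(qf M y) -/(qf M (x *m invmx M)) -qf_inv //.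
rewrite bf_inv // (bfC _ _ sM) bf_inv // => h.
rewrite -/(qf (invmx M) x); lra.
Qed.

Lemma variational_eq M x : symm M -> M \in unitmx ->
  2 * ((x *m invmx M) *m x^T) 0 0 - qf M (x *m invmx M) = qf (invmx M) x.
Proof.
move=> sM uM; rewrite -qf_inv //.
have ->: ((x *m invmx M) *m x^T) 0 0 = qf (invmx M) x by [].
lra.
Qed.

Lemma inv_antitone M N : symm M -> symm N -> pd M -> pd N -> lemx M N ->
  lemx (invmx N) (invmx M).
Proof.
move=> sM sN pM pN hMN x; rewrite qfBl subr_ge0.
have uN := pd_unit pN; have uM := pd_unit pM.
rewrite -(variational_eq x sN uN).
apply: le_trans (variational x (x *m invmx N) sM (pd_psd pM) uM).
have := lemx_qf (x *m invmx N) hMN; lra.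
Qed.

Lemma cs_scalar (a b c : R) : 0 < c ->
  (forall l, 0 <= a - 2 * l * b + l ^+ 2 * c) -> b ^+ 2 <= a * c.
Proof.
move=> c0 h; have := h (b / c).
have e: a - 2 * (b / c) * b + (b / c) ^+ 2 * c = (a * c - b ^+ 2) / c.
  by field; rewrite gt_eqF.
rewrite e => h2; have := mulr_ge0 h2 (ltW c0).
rewrite divfK ?gt_eqF //; lra.
Qed.



Lemma qf_expand M x y l : symm M ->
  qf M (y - l *: x) = qf M y - 2 * l * bf M y x + l ^+ 2 * qf M x.
Proof.
move=> sM; rewrite /qf bfBm !bfBr !bfZr !bfZm (bfC x y sM); ring.
Qed.

Lemma cs_bf M x y : symm M -> psd M -> 0 < qf M x ->
  bf M y x ^+ 2 <= qf M y * qf M x.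
Proof.
move=> sM pM qx; apply: cs_scalar => // l.
by rewrite -qf_expand.
Qed.

Lemma e00M (A B : 'M[R]_1) : (A *m B) 0 0 = A 0 0 * B 0 0.
Proof. by rewrite mxE big_ord1. Qed.

Lemma tr1 (A : 'M[R]_1) : \tr A = A 0 0.
Proof. by rewrite /mxtrace big_ord1. Qed.

Lemma rowT_swap (x y : 'rV[R]_r) : (x *m y^T) 0 0 = (y *m x^T) 0 0.
Proof. by rewrite -e00T trmx_mul trmxK. Qed.

Definition gram (J : finType) (g : J -> 'rV[R]_r) : 'M[R]_r :=
  \sum_j (g j)^T *m g j.

Lemma bf_gram (J : finType) (g : J -> 'rV[R]_r) x y :
  bf (gram g) x y = \sum_j ((g j *m x^T) 0 0) * ((g j *m y^T) 0 0).
Proof.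
rewrite /gram bf_sum; apply: eq_bigr => j _.
by rewrite /bf !mulmxA -mulmxA e00M rowT_swap.
Qed.

Lemma qf_gram (J : finType) (g : J -> 'rV[R]_r) x :
  qf (gram g) x = \sum_j ((g j *m x^T) 0 0) ^+ 2.
Proof. by rewrite /qf bf_gram; apply: eq_bigr => j _; rewrite expr2. Qed.

Lemma psd_gram (J : finType) (g : J -> 'rV[R]_r) : psd (gram g).
Proof. by move=> x; rewrite qf_gram; apply: sumr_ge0 => j _; apply: sqr_ge0. Qed.

Lemma symm_gram (J : finType) (g : J -> 'rV[R]_r) : symm (gram g).
Proof.
rewrite /symm /gram; rewrite linear_sum; apply: eq_bigr => j _ /=.
by rewrite trmx_mul trmxK.
Qed.

Lemma tr_gram (J : finType) (g : J -> 'rV[R]_r) S :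
  \tr (gram g *m S) = \sum_j qf S (g j).
Proof.
rewrite /gram mulmx_suml raddf_sum; apply: eq_bigr => j _.
rewrite -mulmxA /=. by rewrite mxtrace_mulC tr1 /qf /bf.
Qed.

Lemma gram_le (J : finType) (g : J -> 'rV[R]_r) M x : symm M -> pd M ->
  qf (gram g) x <= \tr (gram g *m invmx M) * qf M x.
Proof.
move=> sM pM; have uM := pd_unit pM.
have [->|nz] := eqVneq x 0.
  by rewrite !qf0 mulr0.
rewrite tr_gram mulr_suml qf_gram; apply: ler_sum => j _.
have := cs_bf (g j *m invmx M) sM (pd_psd pM) (pM x nz).
by rewrite -qf_inv // (bfC _ _ sM) bf_inv // rowT_swap.
Qed.

Lemma tr_gram_ge0 (J : finType) (g : J -> 'rV[R]_r) S : psd S ->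
  0 <= \tr (gram g *m S).
Proof. by move=> pS; rewrite tr_gram; apply: sumr_ge0 => j _. Qed.

Lemma tr_gram_le (J : finType) (g : J -> 'rV[R]_r) S T : lemx S T ->
  \tr (gram g *m S) <= \tr (gram g *m T).
Proof.
move=> h; rewrite !tr_gram; apply: ler_sum => j _; exact: lemx_qf.
Qed.



Lemma amgm_bf X y z k : symm X -> psd X -> 0 < k ->
  2 * bf X y z <= k * qf X y + qf X z / k.
Proof.
move=> sX pX k0; have := pX (z - k *: y).
rewrite qf_expand // (bfC _ _ sX) => h.
have e: k * qf X y + qf X z / k - 2 * bf X y z
   = (qf X z - 2 * k * bf X y z + k ^+ 2 * qf X y) / k.
  by field; rewrite gt_eqF.
rewrite -subr_ge0 e; apply: divr_ge0 => //; exact: ltW.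
Qed.

Lemma XNX_bound (J : finType) (gx : J -> 'rV[R]_r) N kappa z :
  symm N -> pd N -> 0 < kappa ->
  (forall y, kappa * qf (gram gx) y <= qf N y) ->
  qf (gram gx *m invmx N *m gram gx) z <= qf (gram gx) z / kappa.
Proof.
move=> sN pN k0 hk; set X := gram gx.
have sX : symm X := symm_gram gx.
have uN := pd_unit pN.
have -> : X *m invmx N *m X = X *m invmx N *m X^T by rewrite sX.
rewrite qf_congr -(variational_eq (z *m X) sN uN).
set y0 := z *m X *m invmx N.
have -> : (y0 *m (z *m X)^T) 0 0 = bf X y0 z by rewrite trmx_mul sX /bf mulmxA.
have := amgm_bf y0 z sX (psd_gram gx) k0.
have := hk y0; rewrite -/X; lra.
Qed.

Lemma resolvent M N : M \in unitmx -> N \in unitmx ->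
  invmx N = invmx M + invmx M *m (M - N) *m invmx M
            + invmx M *m (M - N) *m invmx N *m (M - N) *m invmx M.
Proof.
move=> uM uN.
have e1 : invmx N = invmx M + invmx M *m (M - N) *m invmx N.
  by rewrite mulmxBr mulmxBl mulVmx // mul1mx -(mulmxA (invmx M) N) mulmxV // mulmx1 addrC subrK.
have e2 : invmx N = invmx M + invmx N *m (M - N) *m invmx M.
  by rewrite mulmxBr mulmxBl mulVmx // mul1mx -(mulmxA (invmx N) M) mulmxV // mulmx1 addrC subrK.
rewrite {1}e1 {1}e2 -addrA; congr (_ + _).
by rewrite mulmxDr !mulmxA.
Qed.



Lemma symmD M N : symm M -> symm N -> symm (M + N).
Proof. by rewrite /symm linearD /= => -> ->. Qed.
Lemma symmZ a M : symm M -> symm (a *: M).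
Proof. by rewrite /symm linearZ /= => ->. Qed.
Lemma symmN M : symm M -> symm (- M).
Proof. by rewrite /symm linearN /= => ->. Qed.
Lemma symmB M N : symm M -> symm N -> symm (M - N).
Proof. by move=> sM sN; apply: symmD => //; apply: symmN. Qed.

Lemma tr_scale (A Q : 'M[R]_r) a : \tr (A *m (a *: Q)) = a * \tr (A *m Q).
Proof. by rewrite -scalemxAr mxtraceZ. Qed.

Lemma tr_add (A P Q : 'M[R]_r) : \tr (A *m (P + Q)) = \tr (A *m P) + \tr (A *m Q).
Proof. by rewrite mulmxDr mxtraceD. Qed.

Lemma lemx_scale_gram (J : finType) (gx : J -> 'rV[R]_r) Y k :
  (forall z, qf Y z <= k * qf (gram gx) z) -> lemx Y (k *: gram gx).
Proof. by move=> h z; rewrite qfBl qfZl subr_ge0. Qed.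

Section Barrier.
Variables (K J : finType) (ga : K -> 'rV[R]_r) (gx : J -> 'rV[R]_r).
Let A := gram ga.
Let X := gram gx.

Lemma barrier_gen M s :
  symm M -> pd M -> s * \tr (X *m invmx M) < 1 ->
  let N := M - s *: X in
  let c := \tr (X *m invmx M) in
  let T := \tr (A *m (invmx M *m X *m invmx M)) in
  [/\ symm N, pd N &
   \tr (A *m invmx N) <= \tr (A *m invmx M) + s * T + s ^+ 2 * (c / (1 - s * c)) * T].
Proof.
move=> sM pM hs N c T.
have sX : symm X := symm_gram gx.
have uM := pd_unit pM.
have c0 : 0 <= c by apply: tr_gram_ge0; apply: pd_psd; apply: pd_inv.
have hX : forall y, qf X y <= c * qf M y by move=> y; apply: gram_le.
have qM0 : forall y, 0 <= qf M y by apply: pd_psd.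
have qX0 : forall y, 0 <= qf X y by apply: psd_gram.
have sN : symm N by apply: symmB => //; apply: symmZ.
have qN : forall y, qf N y = qf M y - s * qf X y by move=> y; rewrite /N qfBl qfZl.
have pN : pd N.
  move=> y nz; rewrite qN; have := pM y nz; have := hX y; have := qX0 y.
  have [s0|s0] := leP s 0.
    move=> h1 h2 h3; have : s * qf X y <= 0 by apply: mulr_le0_ge0.
    lra.
  move=> h1 h2 h3.
  have h4 : s * qf X y <= s * (c * qf M y) by rewrite ler_pM2l.
  have : 0 < (1 - s * c) * qf M y by apply: mulr_gt0 => //; lra.
  lra.
split => //.
have uN := pd_unit pN.
have eMN : M - N = s *: X by rewrite /N opprB addrC subrK.
rewrite (resolvent uM uN) eMN !tr_add.
have e2 : invmx M *m (s *: X) *m invmx M = s *: (invmx M *m X *m invmx M).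
  by rewrite -scalemxAr -scalemxAl.
have e3 : invmx M *m (s *: X) *m invmx N *m (s *: X) *m invmx M
    = s ^+ 2 *: (invmx M *m (X *m invmx N *m X) *m invmx M).
  do 4 rewrite -?scalemxAr -?scalemxAl.
  by rewrite scalerA expr2 !mulmxA.
rewrite e2 e3 !tr_scale -/T.
set W := \tr (A *m (invmx M *m (X *m invmx N *m X) *m invmx M)).
suff hW : W <= c / (1 - s * c) * T.
  have : 0 <= s ^+ 2 by apply: sqr_ge0.
  move=> h; have := ler_wpM2l h hW; rewrite mulrA; lra.
have sMi := symm_inv sM.
have hle : lemx (X *m invmx N *m X) ((c / (1 - s * c)) *: X).
  apply: lemx_scale_gram => z.
  have [cz|cpos] := eqVneq c 0.
    have hz : qf X z = 0 by apply/eqP; rewrite eq_le qX0 andbT; have := hX z; rewrite cz mul0r.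
    rewrite cz mul0r mul0r.
    have := @XNX_bound J gx N 1 z sN pN ltr01.
    rewrite -/X hz mul0r => h; apply: h => y; rewrite mul1r qN.
    have : qf X y = 0 by apply/eqP; rewrite eq_le qX0 andbT; have := hX y; rewrite cz mul0r.
    by move=> ->; rewrite mulr0 subr0.
  have cp : 0 < c by rewrite lt_def cpos c0.
  have kp : 0 < c^-1 - s.
    have : s < c^-1.
      by rewrite -(ltr_pM2r cp) mulVf ?gt_eqF.
    lra.
  have := @XNX_bound J gx N (c^-1 - s) z sN pN kp.
  rewrite -/X => h.
  have e : qf X z / (c^-1 - s) = c / (1 - s * c) * qf X z.
    have nz1 : 1 - s * c != 0 by rewrite gt_eqF // subr_gt0.
    have nz2 : c^-1 - s != 0 by rewrite gt_eqF.
    by field; rewrite ?nz1 ?nz2 ?cpos.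
  rewrite -e; apply: h => y; rewrite qN.
  have := hX y; have := qX0 y.
  have : (c^-1 - s) * qf X y = c^-1 * qf X y - s * qf X y by ring.
  move=> ->; move=> h1 h2.
  have : c^-1 * qf X y <= qf M y.
    by rewrite ler_pdivrMl // ; rewrite mulrC in h2 |- *; rewrite mulrC.
  lra.
have := tr_gram_le ga (lemx_congr (invmx M) hle).
rewrite (symm_inv sM) -/A -/W => h; apply: le_trans h _.
by rewrite -scalemxAr -scalemxAl tr_scale.
Qed.

End Barrier.



Lemma tr_sub (A P Q : 'M[R]_r) : \tr (A *m (P - Q)) = \tr (A *m P) - \tr (A *m Q).
Proof. by rewrite mulmxBr raddfB. Qed.

Lemma pd_addr M N : pd M -> psd N -> pd (M + N).
Proof. by move=> pM pN x nz; rewrite qfDl; apply: ltr_wpDr; [apply: pN|apply: pM]. Qed.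

Lemma pd_scale a M : 0 < a -> pd M -> pd (a *: M).
Proof. by move=> a0 pM x nz; rewrite qfZl; apply: mulr_gt0 => //; apply: pM. Qed.

Lemma psd_scale a M : 0 <= a -> psd M -> psd (a *: M).
Proof. by move=> a0 pM x; rewrite qfZl; apply: mulr_ge0. Qed.

Lemma pd_congr_unit S Z : pd S -> Z \in unitmx -> pd (Z *m S *m Z^T).
Proof.
move=> pS uZ x nz; rewrite qf_congr; apply: pS; apply/eqP => h; move/eqP: nz; apply.
by rewrite -(mulmxK uZ x) h mul0mx.
Qed.

Section Pos.
Variables (K : finType) (ga : K -> 'rV[R]_r).
Hypothesis r0 : (0 < r)%N.
Hypothesis pdA : pd (gram ga).

Lemma exists_nz : exists p, ga p != 0.
Proof.
case: (pickP (fun p => ga p != 0)) => [p hp|h]; first by exists p.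
exfalso.
have e : gram ga = 0.
  by rewrite /gram big1 // => p _; move: (h p) => /negbFE/eqP ->; rewrite mulmx0.
have nz : (const_mx 1 : 'rV[R]_r) != 0.
  apply/eqP => /matrixP /(_ 0 (Ordinal r0)); rewrite !mxE => /eqP.
  by rewrite oner_eq0.
by have := pdA nz; rewrite e /qf /bf mulmx0 mul0mx mxE ltxx.
Qed.

Lemma tr_gram_gt0 S : pd S -> 0 < \tr (gram ga *m S).
Proof.
move=> pS; have [p hp] := exists_nz.
rewrite tr_gram (bigD1 p) //=; apply: ltr_wpDr.
  by apply: sumr_ge0 => q _; apply: pd_psd.
exact: pS.
Qed.
End Pos.

Section Resolv.
Variables (K : finType) (ga : K -> 'rV[R]_r).
Let A := gram ga.

Lemma resolvent_ge M N d : symm M -> symm N -> pd M -> pd N ->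
  M - N = d *: A ->
  \tr (A *m invmx M) + d * \tr (A *m (invmx M *m A *m invmx M))
    <= \tr (A *m invmx N).
Proof.
move=> sM sN pM pN e.
rewrite (resolvent (pd_unit pM) (pd_unit pN)) e !tr_add.
have e2 : invmx M *m (d *: A) *m invmx M = d *: (invmx M *m A *m invmx M).
  by rewrite -scalemxAr -scalemxAl.
rewrite e2 tr_scale lerDl.
have e3 : invmx M *m (d *: A) *m invmx N *m (d *: A) *m invmx M
    = (d *: (invmx M *m A)) *m invmx N *m (d *: (invmx M *m A))^T.
  have -> : (d *: (invmx M *m A))^T = d *: (A *m invmx M).
    by rewrite linearZ /= trmx_mul (symm_gram ga) (symm_inv sM).
  do 6 rewrite -?scalemxAr -?scalemxAl.
  by rewrite !mulmxA.
rewrite e3; apply: tr_gram_ge0; apply: psd_congr; apply: pd_psd; exact: pd_inv.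
Qed.

Lemma lower_cs M M0 d : symm M -> symm M0 -> pd M -> pd M0 -> (0 < r)%N ->
  pd A -> 0 < d -> M0 - M = d *: A ->
  d * \tr (A *m invmx M0) <= 1 ->
  (\tr (A *m invmx M) - \tr (A *m invmx M0)) / d
    + (\tr (A *m invmx M) - \tr (A *m invmx M0)) ^+ 2
  <= \tr (A *m (invmx M *m A *m invmx M)).
Proof.
move=> sM sM0 pM pM0 r0 pA d0 e hd.
set Dl := \tr (A *m invmx M) - \tr (A *m invmx M0).
have sA : symm A := symm_gram ga.
set S := invmx M; set S0 := invmx M0.
have sS : symm S := symm_inv sM. have sS0 : symm S0 := symm_inv sM0.
have uM := pd_unit pM; have uM0 := pd_unit pM0.
have e1 : S - S0 = d *: (S *m A *m S0).
  rewrite scalemxAl scalemxAr -e mulmxBr mulmxBl -(mulmxA S M0 S0) /S /S0.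
  by rewrite mulmxV // mulmx1 mulVmx // mul1mx.
have e2 : S - S0 = d *: (S0 *m A *m S).
  rewrite scalemxAl scalemxAr -e mulmxBr mulmxBl -(mulmxA S0 M S) /S /S0.
  by rewrite mulVmx // mul1mx mulmxV // mulmx1.
set beta := \tr (A *m (S *m A *m S0)).
set alpha := \tr (A *m (S *m A *m S0 *m A *m S)).
set gam := \tr (A *m S0).
have hD : Dl = d * beta by rewrite /Dl -tr_sub e1 tr_scale.
have hSL : \tr (A *m (S *m A *m S)) = beta + d * alpha.
  have -> : S *m A *m S = S *m A *m S0 + S *m A *m (S - S0).
    by rewrite mulmxBr addrC subrK.
  rewrite tr_add e2 -scalemxAr tr_scale.
  by rewrite /beta /alpha !mulmxA.
have g0 : 0 < gam by apply: tr_gram_gt0 => //; apply: pd_inv.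
have a0 : 0 <= alpha.
  have -> : alpha = \tr (A *m ((S *m A) *m S0 *m (S *m A)^T)).
    by rewrite /alpha trmx_mul sA sS !mulmxA.
  apply: tr_gram_ge0; apply: psd_congr; apply: pd_psd; exact: pd_inv.
have cs : beta ^+ 2 <= alpha * gam.
  apply: cs_scalar => // l.
  have := @tr_gram_ge0 K ga ((S *m A - l%:M) *m S0 *m (S *m A - l%:M)^T)
    (psd_congr _ (pd_psd (pd_inv sM0 pM0))).
  have -> : (S *m A - l%:M)^T = A *m S - l%:M.
    by rewrite linearB /= trmx_mul sA sS tr_scalar_mx.
  rewrite mulmxBl mulmxBr mulmxBr mulmxBl !mul_scalar_mx !mul_mx_scalar.
  rewrite -/A !(mulmxBr, mulmxBl, raddfB) /=.
  rewrite -scalemxAl !tr_scale !mulmxA.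
  have hb : \tr (A *m S0 *m A *m S) = beta.
    rewrite /beta -mxtrace_tr !trmx_mul sA sS sS0 !mulmxA.
    by rewrite mxtrace_mulC !mulmxA.
  rewrite hb /beta /alpha /gam !mulmxA.
  by move=> h; apply: (le_trans h); rewrite le_eqVlt; apply/orP; left; apply/eqP; ring.
rewrite hSL hD.
have e1' : d * beta / d = beta by field; rewrite gt_eqF.
have e2' : (d * beta) ^+ 2 = d ^+ 2 * beta ^+ 2 by ring.
rewrite e1' e2'.
have h1 : d ^+ 2 * beta ^+ 2 <= d ^+ 2 * (alpha * gam) by rewrite ler_wpM2l // sqr_ge0.
have h2 : d ^+ 2 * (alpha * gam) = d * alpha * (d * gam) by ring.
have h3 : d * alpha * (d * gam) <= d * alpha.
  by rewrite -{2}(mulr1 (d * alpha)) ler_wpM2l // mulr_ge0 // ltW.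
lra.
Qed.

End Resolv.



Lemma arithU (t c T Dl : R) : 0 < t -> 0 <= c -> 0 <= T -> 0 < Dl ->
  T / Dl + c < t^-1 ->
  t * T + t ^+ 2 * (c / (1 - t * c)) * T <= Dl.
Proof.
move=> t0 c0 T0 D0 h.
have h1 : t * T + t * c * Dl < Dl.
  have h' : (T / Dl + c) * (t * Dl) < t^-1 * (t * Dl).
    by rewrite ltr_pM2r // mulr_gt0.
  have e1 : (T / Dl + c) * (t * Dl) = t * T + t * c * Dl by field; rewrite gt_eqF.
  have e2 : t^-1 * (t * Dl) = Dl by field; rewrite gt_eqF.
  by move: h'; rewrite e1 e2.
have a1 : 0 < 1 - t * c.
  have : 0 <= t * T by apply: mulr_ge0 => //; apply: ltW.
  move=> h2; have h3 : t * c * Dl < Dl by lra.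
  have : t * c < 1.
    by rewrite -(ltr_pM2r D0) mul1r.
  lra.
have e : t * T + t ^+ 2 * (c / (1 - t * c)) * T = (t * T) / (1 - t * c).
  by field; rewrite gt_eqF.
rewrite e ler_pdivrMr //; lra.
Qed.

Lemma arithL (t c T Dl : R) : 0 < t -> 0 <= c -> 0 < Dl ->
  T / Dl - c = t^-1 ->
  - t * T + (- t) ^+ 2 * (c / (1 - (- t) * c)) * T <= - Dl.
Proof.
move=> t0 c0 D0 h.
have hT : T = Dl * (t^-1 + c).
  by rewrite -h; field; rewrite gt_eqF.
have a1 : 0 < 1 - (- t) * c.
  have : 0 <= t * c by apply: mulr_ge0 => //; apply: ltW.
  lra.
rewrite hT le_eqVlt; apply/orP; left; apply/eqP.
by field; rewrite !gt_eqF.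
Qed.



Section BSS.
Variables (I J : finType) (g : I -> J -> 'rV[R]_r).
Definition Xm i := gram (g i).
Definition gA (p : I * J) := g p.1 p.2.
Definition Am := gram gA.

Lemma A_sum : Am = \sum_i Xm i.
Proof. by rewrite /Am /gram /Xm /gram pair_bigA. Qed.

Lemma tr_sum_X (P Q : 'M[R]_r) :
  \sum_i \tr (P *m (Q *m Xm i *m Q)) = \tr (P *m (Q *m Am *m Q)).
Proof.
rewrite A_sum mulmx_sumr mulmx_suml mulmx_sumr raddf_sum; apply: eq_bigr => i _.
by [].
Qed.

Lemma tr_sum_X2 (Q : 'M[R]_r) :
  \sum_i \tr (Xm i *m Q) = \tr (Am *m Q).
Proof. by rewrite A_sum mulmx_suml raddf_sum. Qed.

Hypothesis r0 : (0 < r)%N.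
Hypothesis pdA : pd Am.
Section Params.
Variables (dU dL eU eL : R).
Hypotheses (dU0 : 0 < dU) (dL0 : 0 < dL) (eU0 : 0 <= eU) (eL0 : 0 <= eL).
Hypothesis dLeL : dL * eL < 1.
Hypothesis gap : dU^-1 + eU < dL^-1 - eL.

Definition Inv B u l :=
  [/\ symm B, pd (u *: Am - B), pd (B - l *: Am),
      \tr (Am *m invmx (u *: Am - B)) <= eU &
      \tr (Am *m invmx (B - l *: Am)) <= eL].

Lemma step B u l : Inv B u l ->
  exists i t, 0 < t /\ Inv (B + t *: Xm i) (u + dU) (l + dL).
Proof.
move=> [sB pU pL hU hL].
have sA : symm Am := symm_gram gA.
have psdA : psd Am := psd_gram gA.
set M0U := u *: Am - B; set MU := (u + dU) *: Am - B.
set M0L := B - l *: Am; set ML := B - (l + dL) *: Am.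
have eU1 : MU - M0U = dU *: Am.
  by apply/matrixP => a b; rewrite /MU /M0U !mxE; ring.
have eL1 : M0L - ML = dL *: Am.
  by apply/matrixP => a b; rewrite /ML /M0L !mxE; ring.
have sM0U : symm M0U by apply: symmB => //; apply: symmZ.
have sMU : symm MU by apply: symmB => //; apply: symmZ.
have sM0L : symm M0L by apply: symmB => //; apply: symmZ.
have sML : symm ML by apply: symmB => //; apply: symmZ.
have pMU : pd MU.
  have -> : MU = M0U + dU *: Am by rewrite -eU1 addrC subrK.
  by apply: pd_addr => //; apply: psd_scale => //; apply: ltW.
have pML : pd ML.
  move=> y nz.
  have -> : ML = M0L - dL *: Am by rewrite -eL1 opprB addrC subrK.
  rewrite qfBl qfZl.
  have h1 := gram_le gA y sM0L pL.
  have h2 := pL y nz.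
  have h3 : \tr (gram gA *m invmx M0L) * qf M0L y <= eL * qf M0L y.
    by rewrite ler_pM2r.
  have h4 : dL * qf (gram gA) y <= dL * (eL * qf M0L y) by rewrite ler_pM2l //; lra.
  have h5 : dL * (eL * qf M0L y) < qf M0L y.
    by rewrite mulrA -{2}(mul1r (qf M0L y)) ltr_pM2r.
  rewrite -/Am in h4; lra.
set DU := \tr (Am *m invmx M0U) - \tr (Am *m invmx MU).
set SU := \tr (Am *m (invmx MU *m Am *m invmx MU)).
have hDU : dU * SU <= DU.
  have := resolvent_ge sMU sM0U pMU pU eU1; rewrite -/Am /DU; lra.
have SU0 : 0 < SU.
  apply: tr_gram_gt0 => //.
  have -> : invmx MU *m Am *m invmx MU = invmx MU *m Am *m (invmx MU)^T.
    by rewrite (symm_inv sMU).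
  apply: pd_congr_unit => //; rewrite unitmx_inv; exact: pd_unit.
have DU0 : 0 < DU by apply: lt_le_trans hDU; apply: mulr_gt0.
set DL := \tr (Am *m invmx ML) - \tr (Am *m invmx M0L).
set SL := \tr (Am *m (invmx ML *m Am *m invmx ML)).
have hDL : DL / dL + DL ^+ 2 <= SL.
  apply: (lower_cs (ga:=gA) (M:=ML) (M0:=M0L) (d:=dL)) => //.
  rewrite -/Am; apply: le_trans (ltW dLeL); rewrite ler_pM2l //.
have DL0 : 0 < DL.
  have := resolvent_ge sM0L sML pL pML eL1; rewrite -/Am /DL => h.
  have : 0 < dL * \tr (Am *m (invmx M0L *m Am *m invmx M0L)).
    apply: mulr_gt0 => //; apply: tr_gram_gt0 => //.
    have -> : invmx M0L *m Am *m invmx M0L = invmx M0L *m Am *m (invmx M0L)^T.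
      by rewrite (symm_inv sM0L).
    apply: pd_congr_unit => //; rewrite unitmx_inv; exact: pd_unit.
  lra.
set TU := fun i => \tr (Am *m (invmx MU *m Xm i *m invmx MU)).
set cU := fun i => \tr (Xm i *m invmx MU).
set TL := fun i => \tr (Am *m (invmx ML *m Xm i *m invmx ML)).
set cL := fun i => \tr (Xm i *m invmx ML).
set U := fun i => TU i / DU + cU i.
set L := fun i => TL i / DL - cL i.
have TU0 : forall i, 0 <= TU i.
  move=> i; apply: tr_gram_ge0.
  have -> : invmx MU *m Xm i *m invmx MU = invmx MU *m Xm i *m (invmx MU)^T.
    by rewrite (symm_inv sMU).
  by apply: psd_congr; apply: psd_gram.
have TL0 : forall i, 0 <= TL i.
  move=> i; apply: tr_gram_ge0.
  have -> : invmx ML *m Xm i *m invmx ML = invmx ML *m Xm i *m (invmx ML)^T.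
    by rewrite (symm_inv sML).
  by apply: psd_congr; apply: psd_gram.
have cU0 : forall i, 0 <= cU i.
  by move=> i; apply: tr_gram_ge0; apply: pd_psd; apply: pd_inv.
have cL0 : forall i, 0 <= cL i.
  by move=> i; apply: tr_gram_ge0; apply: pd_psd; apply: pd_inv.
have sumU : \sum_i U i <= dU^-1 + eU.
  rewrite /U big_split /= -mulr_suml /TU /cU tr_sum_X tr_sum_X2 -/SU.
  have h1 : SU / DU <= dU^-1.
    rewrite ler_pdivrMr // -(ler_pM2l dU0) mulrA mulfV ?gt_eqF // mul1r.
    by [].
  have h2 : \tr (Am *m invmx MU) <= eU by rewrite /DU in DU0; lra.
  lra.
have sumL : dL^-1 - eL <= \sum_i L i.
  rewrite /L big_split /= -mulr_suml sumrN /TL /cL tr_sum_X tr_sum_X2 -/SL.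
  have h1 : dL^-1 + DL <= SL / DL.
    rewrite ler_pdivlMr //.
    have -> : (dL^-1 + DL) * DL = DL / dL + DL ^+ 2 by rewrite expr2; field; rewrite gt_eqF.
    by [].
  have h2 : \tr (Am *m invmx ML) = \tr (Am *m invmx M0L) + DL by rewrite /DL; ring.
  rewrite h2; lra.
have [i hi] : exists i, U i < L i.
  case: (pickP (fun i => U i < L i)) => [i hi|h]; first by exists i.
  exfalso.
  have : \sum_i L i <= \sum_i U i.
    by apply: ler_sum => i _; move: (h i); rewrite ltNge => /negbFE.
  by move=> hLU; have := le_trans (le_trans sumL hLU) sumU; rewrite leNgt gap.
have Ui0 : 0 <= U i by apply: addr_ge0 => //; apply: divr_ge0 => //; apply: ltW.
have Li0 : 0 < L i by apply: le_lt_trans hi.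
set t := (L i)^-1.
have t0 : 0 < t by rewrite invr_gt0.
exists i, t; split => //.
have Lt : L i = t^-1 by rewrite /t invrK.
have tcU : t * \tr (Xm i *m invmx MU) < 1.
  have : cU i < t^-1.
    rewrite -Lt; apply: le_lt_trans hi; rewrite /U lerDr; apply: divr_ge0 => //.
    exact: ltW.
  rewrite -(ltr_pM2l t0) mulfV ?gt_eqF //.
have [sNU pNU bU] := barrier_gen gA sMU pMU tcU.
have tcL : (- t) * \tr (Xm i *m invmx ML) < 1.
  have : 0 <= t * cL i by apply: mulr_ge0 => //; apply: ltW.
  rewrite /cL mulNr; lra.
have [sNL pNL bL] := barrier_gen gA sML pML tcL.
have eNU : MU - t *: gram (g i) = (u + dU) *: Am - (B + t *: Xm i).
  by apply/matrixP => a b; rewrite /MU /Xm !mxE; ring.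
have eNL : ML - (- t) *: gram (g i) = (B + t *: Xm i) - (l + dL) *: Am.
  by apply/matrixP => a b; rewrite /ML /Xm !mxE; ring.
rewrite eNU in sNU pNU bU; rewrite eNL in sNL pNL bL.
split => //.
- apply: symmD => //; apply: symmZ; exact: symm_gram.
- apply: le_trans bU _.
  have := @arithU t (cU i) (TU i) DU t0 (cU0 i) (TU0 i) DU0.
  rewrite -Lt => /(_ hi).
  rewrite /TU /cU -/Am /Xm /DU => h.
  rewrite /DU in h; lra.
- apply: le_trans bL _.
  have := @arithL t (cL i) (TL i) DL t0 (cL0 i) DL0.
  rewrite -Lt => /(_ erefl).
  rewrite /TL /cL -/Am /Xm => h.
  rewrite /DL in h; lra.
Qed.



Lemma iterate B0 u0 l0 : B0 = 0 -> Inv B0 u0 l0 -> forall n : nat,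
  exists s : I -> R, [/\ (forall i, 0 <= s i),
    (#|[set i | s i != 0%R]| <= n)%N &
    Inv (\sum_i s i *: Xm i) (u0 + n%:R * dU) (l0 + n%:R * dL)].
Proof.
move=> -> h0; elim=> [|n [s [s0 sc sI]]].
  exists (fun _ => 0); split => //.
    by rewrite leqn0 cards_eq0; apply/eqP/setP => i; rewrite !inE eqxx.
  rewrite !mul0r !addr0 big1 //; move=> i _; exact: scale0r.
have [i [t [t0 hI]]] := step sI.
exists (fun j => s j + (if j == i then t else 0)); split.
- by move=> j; apply: addr_ge0 => //; case: (j == i) => //; apply: ltW.
- apply: (@leq_trans #|i |: [set j | s j != 0]|).
    apply: subset_leq_card; apply/subsetP => j; rewrite !inE.
    by case: (eqVneq j i) => [->|_]; rewrite ?eqxx //= addr0.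
  by rewrite cardsU1 -add1n leq_add // leq_b1.
- have -> : \sum_j (s j + (if j == i then t else 0)) *: Xm j
            = \sum_j s j *: Xm j + t *: Xm i.
    rewrite (eq_bigr (fun j => s j *: Xm j + (if j == i then t else 0) *: Xm j)).
      rewrite big_split /=; congr (_ + _).
      rewrite (bigD1 i) //= eqxx big1 ?addr0 // => j /negbTE ->.
      exact: scale0r.
    by move=> j _; rewrite scalerDl.
  have e1 : u0 + n.+1%:R * dU = u0 + n%:R * dU + dU.
    by rewrite -addn1 natrD mulrDl mul1r addrA.
  have e2 : l0 + n.+1%:R * dL = l0 + n%:R * dL + dL.
    by rewrite -addn1 natrD mulrDl mul1r addrA.
  by rewrite e1 e2.
Qed.

End Params.



Lemma bss_main (k : nat) : (3 <= k)%N ->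
  exists s : I -> R, [/\ (forall i, 0 <= s i),
    (#|[set i | s i != 0%R]| <= k * k * r)%N &
    forall y, r%:R * k%:R * (k%:R - 1) * qf Am y <= qf (\sum_i s i *: Xm i) y
              /\ qf (\sum_i s i *: Xm i) y <= r%:R * (k%:R + 1) * (k%:R + 4) * qf Am y].
Proof.
move=> k3.
set kk : R := k%:R; set rr : R := r%:R.
have kk3 : 3 <= kk by rewrite /kk (ler_nat R 3 k).
have kk0 : 0 < kk by lra.
have rr0 : 0 < rr by rewrite /rr ltr0n.
have uA := pd_unit pdA.
have dU0 : 0 < (kk + 4) / kk by apply: divr_gt0; lra.
have eU0 : 0 <= 1 / (kk + 4) by apply: divr_ge0; lra.
have eL0 : 0 <= 1 / kk by apply: divr_ge0; lra.
have dLeL : 1 * (1 / kk) < 1.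
  by rewrite mul1r ltr_pdivrMr // mul1r; lra.
have gap : ((kk + 4) / kk)^-1 + 1 / (kk + 4) < 1^-1 - 1 / kk.
  rewrite -subr_gt0.
  have -> : 1^-1 - 1 / kk - (((kk + 4) / kk)^-1 + 1 / (kk + 4))
            = (2 * kk - 4) / (kk * (kk + 4)).
    by field; rewrite !gt_eqF //; lra.
  by apply: divr_gt0; [lra| apply: mulr_gt0; lra].
have hI : Inv (1 / (kk + 4)) (1 / kk) 0 (rr * (kk + 4)) (- (rr * kk)).
  have pu : pd (rr * (kk + 4) *: Am) by apply: pd_scale => //; apply: mulr_gt0 => //; lra.
  have pl : pd (rr * kk *: Am) by apply: pd_scale => //; apply: mulr_gt0.
  have e1 : rr * (kk + 4) *: Am - 0 = rr * (kk + 4) *: Am by rewrite subr0.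
  have e2 : 0 - - (rr * kk) *: Am = rr * kk *: Am by rewrite sub0r scaleNr opprK.
  split; rewrite ?e1 ?e2 //.
  - by rewrite /symm trmx0.
  - rewrite invmxZ ?(pd_unit pu) // tr_scale mulmxV // mxtrace1 -/rr.
    by rewrite le_eqVlt; apply/orP; left; apply/eqP; field; rewrite !gt_eqF //; lra.
  - rewrite invmxZ ?(pd_unit pl) // tr_scale mulmxV // mxtrace1 -/rr.
    by rewrite le_eqVlt; apply/orP; left; apply/eqP; field; rewrite !gt_eqF.
have [s [s0 sc sI]] := iterate dU0 ltr01 dLeL gap erefl hI (k * k * r).
exists s; split => // y.
case: sI => _ pu pl _ _.
have hn : (k * k * r)%:R = kk * kk * rr :> R by rewrite !natrM.
rewrite hn in pu pl.
have eu : rr * (kk + 4) + kk * kk * rr * ((kk + 4) / kk) = rr * (kk + 1) * (kk + 4).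
  by field; rewrite gt_eqF.
have el : - (rr * kk) + kk * kk * rr * 1 = rr * kk * (kk - 1) by ring.
rewrite eu in pu; rewrite el in pl.
have := pd_psd pu y; have := pd_psd pl y.
rewrite !qfBl !qfZl !subr_ge0 => h1 h2; split => //.
Qed.

End BSS.

End Core.



Section SOS.
Variables (D : finType) (P : binpred D).
Hypothesis HP : forall B C : {set D}, #|B| = 2%N -> #|C| = 2%N -> ~~ restr_singleton P B C.

Definition Zs a := [set b | ~~ P a b].

Lemma Zs_disj a a' b : Zs a != Zs a' -> b \in Zs a -> b \in Zs a' -> False.
Proof.
move=> neq ba ba'.
have [c hc] : exists c, (c \in Zs a) != (c \in Zs a').
  apply/existsP; apply: contraR neq => /existsPn h; apply/eqP/setP => c.
  by have := h c; rewrite negbK => /eqP.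
have aa' : a != a' by apply: contraNneq neq => ->.
have cb : c != b by apply: contraNneq hc => ->; rewrite ba ba'.
have := HP (B := [set a; a']) (C := [set b; c]).
rewrite !cards2 aa' (eq_sym b c) cb => /(_ erefl erefl); apply/negP/negPn.
rewrite /restr_singleton.
move: ba ba' hc; rewrite !inE => /negbTE Pab /negbTE Pa'b.
have key : forall x0, x0 \in [set a; a'] -> P x0 c ->
    (forall x, x \in [set a; a'] -> P x c -> x = x0) ->
    #|[set bc in setX [set a; a'] [set b; c] | P bc.1 bc.2]| == 1%N.
  move=> x0 hx0 Px0 uniq.
  suff -> : [set bc in setX [set a; a'] [set b; c] | P bc.1 bc.2] = [set (x0, c)].
    by rewrite cards1.
  apply/setP => -[x y]; rewrite !inE /= xpair_eqE.
  apply/idP/idP.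
  - case/andP => /andP [hx hy] Pxy.
    have hxB : x \in [set a; a'] by rewrite !inE.
    have yc : y = c.
      case/orP: hy => /eqP // yb; exfalso; move: Pxy; rewrite yb.
      by case/orP: hx => /eqP ->; rewrite ?Pab ?Pa'b.
    subst y; by rewrite (uniq x hxB Pxy) !eqxx.
  - case/andP => /eqP -> /eqP ->.
    move: hx0; rewrite !inE => ->; by rewrite eqxx orbT Px0.
move=> hc'.
case Pac: (P a c); case Pa'c: (P a' c); move: hc'; rewrite ?Pac ?Pa'c //= => _.
- apply: (key a); rewrite ?inE ?eqxx //.
  move=> x; rewrite !inE; case/orP => /eqP -> //; by rewrite Pa'c.
- apply: (key a'); rewrite ?inE ?eqxx ?orbT //.
  move=> x; rewrite !inE; case/orP => /eqP -> //; by rewrite Pac.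
Qed.



Definition rT (T : {set D}) a : bool := Zs a == T.
Definition zT (T : {set D}) b : bool := (b \in T) && [exists a', Zs a' == T].
Definition zeta b : bool := [forall a', P a' b].

Lemma sq_bool (R : realFieldType) (p q : bool) :
  ((p%:R - q%:R) ^+ 2 : R) = p%:R + q%:R - 2 * (p && q)%:R.
Proof. by case: p; case: q => /=; rewrite ?subrr ?subr0 ?sub0r; ring. Qed.

Lemma sos (R : realFieldType) a b :
  2 * (P a b)%:R = (zeta b)%:R
     + \sum_(T : {set D}) (((rT T a)%:R - (zT T b)%:R) ^+ 2 : R).
Proof.
rewrite (eq_bigr _ (fun T _ => sq_bool R (rT T a) (zT T b))).
rewrite sumrB big_split /=.
have S1 : \sum_(T : {set D}) ((rT T a)%:R : R) = 1.
  rewrite (bigD1 (Zs a)) //= /rT eqxx big1 ?addr0 // => T /negbTE.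
  by rewrite eq_sym => ->.
have S3 : \sum_(T : {set D}) (2 * (rT T a && zT T b)%:R : R) = 2 * (~~ P a b)%:R.
  rewrite (bigD1 (Zs a)) //= /rT eqxx big1 ?addr0.
    rewrite /zT /=; congr (2 * _%:R).
    have -> : [exists a', Zs a' == Zs a] by apply/existsP; exists a.
    by rewrite inE andbT.
  by move=> T /negbTE; rewrite eq_sym => -> /=; rewrite mulr0.
have S2 : \sum_(T : {set D}) ((zT T b)%:R : R) = (~~ zeta b)%:R.
  case: (pickP (fun a0 => ~~ P a0 b)) => [a0 ha0|hn].
    have zf : zeta b = false.
      by apply/negbTE/forallPn; exists a0.
    rewrite zf (bigD1 (Zs a0)) //= big1 ?addr0.
      rewrite /zT inE ha0 /=; case: existsP => // -[]; by exists a0.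
    move=> T hT; rewrite /zT; case: (boolP (b \in T)) => //= bT.
    case: existsP => //= -[a1 /eqP e1]; exfalso.
    apply: (@Zs_disj a1 a0 b); rewrite ?e1 //; last by rewrite inE.
  have zt : zeta b = true.
    by apply/forallP => a0; move: (hn a0) => /= /negbFE.
  rewrite zt big1 // => T _; rewrite /zT; case: (boolP (b \in T)) => //= bT.
  case: existsP => //= -[a1 /eqP e1]; exfalso.
  by move: (hn a1) => /=; move: bT; rewrite -e1 inE => ->.
rewrite S1 S2 S3.
by case: (P a b); case: (zeta b) => /=; ring.
Qed.

End SOS.


Lemma reduce (R : realFieldType) (n : nat) (K : finType) (h : K -> 'rV[R]_n) :
  exists (m : nat) (B : 'M[R]_(m, n)) (h' : K -> 'rV[R]_m),
    [/\ (m <= n)%N, (forall p, h p = h' p *m B) & pd (gram h')].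
Proof.
pose G : 'M[R]_(#|K|, n) := \matrix_(q < #|K|) h (enum_val q).
pose B := row_base G.
pose H := G *m pinvmx B.
have HB : H *m B = G by apply: mulmxKpV; rewrite eq_row_base.
exists (\rank G), B, (fun p => row (enum_rank p) H); split.
- exact: rank_leq_col.
- by move=> p; rewrite -row_mul HB rowK enum_rankK.
have fullH : row_full H.
  rewrite /row_full eqn_leq rank_leq_col /=.
  by rewrite -{1}HB mxrankM_maxl.
move=> y nz.
have Hy : H *m y^T != 0.
  apply: contra nz => /eqP e; have [X hX] := row_fullP fullH.
  have : y^T = 0 by rewrite -(mul1mx y^T) -hX -mulmxA e mulmx0.
  by move=> e2; rewrite -(trmxK y) e2 trmx0.
have [q hq] : exists q, (H *m y^T) q 0 != 0.
  apply/existsP; apply: contraR Hy => /existsPn h0; apply/eqP/matrixP => i j.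
  by rewrite (ord1 j) [RHS]mxE; move: (h0 i); rewrite negbK => /eqP.
rewrite qf_gram (bigD1 (enum_val q)) //= enum_valK.
apply: ltr_pwDl; last by apply: sumr_ge0 => p _; apply: sqr_ge0.
rewrite -row_mul [X in X ^+ 2]mxE.
by rewrite lt_def sqrf_eq0 hq sqr_ge0.
Qed.

Lemma bss_all (R : realFieldType) (r : nat) (I J : finType) (g : I -> J -> 'rV[R]_r)
  (k : nat) : pd (Am g) -> (3 <= k)%N ->
  exists s : I -> R, [/\ (forall i, 0 <= s i),
    (#|[set i | s i != 0%R]| <= k * k * r)%N &
    forall y, r%:R * k%:R * (k%:R - 1) * qf (Am g) y <= qf (\sum_i s i *: Xm g i) y
              /\ qf (\sum_i s i *: Xm g i) y <= r%:R * (k%:R + 1) * (k%:R + 4) * qf (Am g) y].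
Proof.
move=> pA k3; case: (posnP r) => [r0|r0]; last exact: bss_main.
subst r; exists (fun _ => 0); split => //.
  by rewrite muln0 leqn0 cards_eq0; apply/eqP/setP => i; rewrite !inE eqxx.
by move=> y; rewrite (thinmx0 y) !qf0 !mulr0.
Qed.


Lemma sum_opt (R : zmodType) (T : finType) (F : option T -> R) :
  \sum_(j : option T) F j = F None + \sum_(t : T) F (Some t).
Proof.
rewrite (bigD1 None) //=; congr (_ + _).
rewrite (reindex_omap Some (fun j => j)) //=.
  by apply: eq_bigl => t; rewrite eqxx.
by case.
Qed.

Section Main.
Variables (R : realType) (D : finType) (P : binpred D).
Hypothesis HP : forall B C : {set D}, #|B| = 2%N -> #|C| = 2%N -> ~~ restr_singleton P B C.
Variables (V : finType) (Pi : {set V * V}) (w : V * V -> R).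
Hypothesis wpos : forall c, c \in Pi -> 0 < w c.

Definition NN := #|{: V * D}|.
Definition xA (A : V -> D) : 'rV[R]_NN :=
  \row_i ((A (enum_val i).1 == (enum_val i).2)%:R).
Definition lform (f : V -> D -> R) : 'rV[R]_NN :=
  \row_i f (enum_val i).1 (enum_val i).2.

Lemma lform_xA f A : (lform f *m (xA A)^T) 0 0 = \sum_v f v (A v).
Proof.
rewrite !mxE.
rewrite (eq_bigr (fun i : 'I_NN => (fun p : V * D => f p.1 p.2 * (A p.1 == p.2)%:R) (enum_val i))); last first.
  by move=> i _; rewrite !mxE.
rewrite -(big_enum_val (A := predT) (fun p : V * D => f p.1 p.2 * (A p.1 == p.2)%:R)).
rewrite -(pair_bigA _ (fun v d => f v d * (A v == d)%:R)) /=.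
apply: eq_bigr => v _; rewrite (bigD1 (A v)) //= eqxx mulr1 big1 ?addr0 //.
by move=> d; rewrite eq_sym => /negbTE ->; rewrite mulr0.
Qed.



Lemma sum_delta (u : V) (F : V -> R) : \sum_v (v == u)%:R * F v = F u.
Proof.
rewrite (bigD1 u) //= eqxx mul1r big1 ?addr0 //.
by move=> v /negbTE ->; rewrite mul0r.
Qed.

Definition wc c := if c \in Pi then w c else 0.
Lemma wc_ge0 c : 0 <= wc c.
Proof. by rewrite /wc; case: ifP => // /wpos /ltW. Qed.

Definition gval (A : V -> D) (c : V * V) (j : option {set D}) : R :=
  match j with
  | None => (zeta P (A c.2))%:R
  | Some T => (rT P T (A c.1))%:R - (zT P T (A c.2))%:R
  end.

Definition gf (c : V * V) (j : option {set D}) : 'rV[R]_NN :=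
  Num.sqrt (wc c) *: lform (fun v d => match j with
     | None => (v == c.2)%:R * (zeta P d)%:R
     | Some T => (v == c.1)%:R * (rT P T d)%:R - (v == c.2)%:R * (zT P T d)%:R
     end).

Lemma gf_val c j A : (gf c j *m (xA A)^T) 0 0 = Num.sqrt (wc c) * gval A c j.
Proof.
rewrite /gf -scalemxAl e00Z lform_xA; congr (_ * _).
case: j => [T|] /=; last exact: sum_delta.
by rewrite sumrB !sum_delta.
Qed.

Lemma gf_sq c A :
  \sum_j ((gf c j *m (xA A)^T) 0 0) ^+ 2 = 2 * wc c * (P (A c.1) (A c.2))%:R.
Proof.
rewrite (eq_bigr (fun j => wc c * gval A c j ^+ 2)); last first.
  by move=> j _; rewrite gf_val exprMn sqr_sqrtr // wc_ge0.
rewrite -mulr_sumr -mulrA mulrCA (sos HP R (A c.1) (A c.2)) sum_opt /=.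
congr (_ * (_ + _)); first by case: (zeta P _); rewrite ?expr0n ?expr1n.
Qed.

End Main.

Lemma param_bounds (R : realFieldType) (kk eps : R) : 3 <= kk -> 4 < eps * kk ->
  1 - eps <= 2 * (kk * (kk - 1)) / (kk * (kk - 1) + (kk + 1) * (kk + 4)) /\
  2 * ((kk + 1) * (kk + 4)) / (kk * (kk - 1) + (kk + 1) * (kk + 4)) <= 1 + eps.
Proof.
move=> k3 ek.
have den0 : 0 < kk * (kk - 1) + (kk + 1) * (kk + 4).
  have : 0 <= kk * (kk - 1) by apply: mulr_ge0; lra.
  have : 0 < (kk + 1) * (kk + 4) by apply: mulr_gt0; lra.
  lra.
set den := kk * (kk - 1) + (kk + 1) * (kk + 4).
have th : (6 * kk + 4) / den <= eps.
  rewrite ler_pdivrMr //.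
  have : eps * den = 2 * (eps * kk * kk) + eps * (4 * kk + 4).
    by rewrite /den; ring.
  move=> ->.
  have h1 : 4 * kk <= eps * kk * kk by rewrite ler_pM2r; lra.
  have h2 : 0 <= eps * (4 * kk + 4).
    apply: mulr_ge0; last lra.
    have : 0 < eps * kk by lra.
    by rewrite pmulr_lgt0 ?(lt_le_trans _ k3) // => /ltW.
  lra.
have e1 : 2 * (kk * (kk - 1)) / den = 1 - (6 * kk + 4) / den.
  by rewrite /den; field; rewrite gt_eqF.
have e2 : 2 * ((kk + 1) * (kk + 4)) / den = 1 + (6 * kk + 4) / den.
  by rewrite /den; field; rewrite gt_eqF.
rewrite e1 e2; split; lra.
Qed.

Unset Implicit Arguments.

Theorem theorem8 (R : realType) (D : finType) (P : binpred D) :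
  (forall B C : {set D}, #|B| = 2%N -> #|C| = 2%N -> ~~ restr_singleton P B C) ->
  exists K : R, 0 < K /\
    forall (eps : R), 0 < eps -> eps < 1 ->
    forall (V : finType) (Pi : {set V * V}) (w : V * V -> R),
      wf_instance Pi w ->
      exists (Pi' : {set V * V}) (w' : V * V -> R),
        is_sparsifier P Pi w eps Pi' w' /\
        (#|Pi'|%:R <= K * #|V|%:R / eps ^+ 2).
Proof.
move=> HP.
exists (49 * #|D|.+1)%:R; split; first by rewrite ltr0n muln_gt0.
move=> eps e0 e1 V Pi w [wf1 wf2].
set k := (Num.truncn (4 / eps)).+3.
have k3 : (3 <= k)%N by [].
pose h := fun p : (V * V) * option {set D} => gf P Pi w p.1 p.2.
have [m [B [h' [mN hB pdh']]]] := reduce h.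
pose g' := fun c j => h' (c, j).
have eA : Am g' = gram h'.
  by rewrite /Am /gram; apply: eq_bigr => -[c j] _.
have pdA : pd (Am g') by rewrite eA.
have [s [s0 sc hs]] := bss_all pdA k3.
pose y := fun A : V -> D => xA R A *m B^T.
have key : forall A c, qf (Xm g' c) (y A) = 2 * wc Pi w c * (P (A c.1) (A c.2))%:R.
  move=> A c; rewrite /Xm qf_gram -(gf_sq HP wf2 c A).
  apply: eq_bigr => j _; congr (_ ^+ 2).
  rewrite /y trmx_mul trmxK mulmxA /g' -hB.
  by [].
have hVal : forall A, qf (Am g') (y A) = 2 * Val P Pi w A.
  move=> A; rewrite A_sum qf_sum /Val mulr_sumr [in RHS]big_mkcond /=.
  apply: eq_bigr => c _; rewrite key /wc.
  by case: (c \in Pi); rewrite ?mulr0 ?mul0r //= mulrA.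
set kk : R := k%:R; set mm : R := m%:R.
set lo := kk * (kk - 1); set hi := (kk + 1) * (kk + 4).
pose sig : R := if (0 < m)%N then 2 / (mm * (lo + hi)) else 1.
have kk3 : 3 <= kk by rewrite /kk (ler_nat R 3 k).
have lohi : 0 < lo + hi.
  have : 0 <= lo by apply: mulr_ge0; lra.
  have : 0 < hi by apply: mulr_gt0; lra.
  lra.
have sig0 : 0 < sig.
  rewrite /sig; case: ifP => // m0; apply: divr_gt0 => //.
  by apply: mulr_gt0 => //; rewrite ltr0n.
pose Pi' := [set c in Pi | s c != 0].
pose w' := fun c => sig * s c * w c.
have hVal' : forall A, sig * qf (\sum_c s c *: Xm g' c) (y A) = 2 * Val P Pi' w' A.
  move=> A; rewrite qf_sum /Val mulr_sumr mulr_sumr [in RHS]big_mkcond /=.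
  apply: eq_bigr => c _; rewrite qfZl key /wc /Pi' inE.
  case: (c \in Pi) => /=; last by rewrite mulr0 mul0r mulr0 mulr0.
  case: eqP => [->|_] /=; first by rewrite !mul0r mulr0.
  rewrite /w'; ring.
exists Pi', w'; split.
  split.
  - by apply/subsetP => c; rewrite inE => /andP [].
  split.
  - move=> c; rewrite inE => /andP [cP sc0]; rewrite /w'.
    apply: mulr_gt0; last exact: wf2.
    by apply: mulr_gt0 => //; rewrite lt_def sc0 s0.
  move=> A.
  have qa := hVal A; have qb := hVal' A.
  move: qa qb; set QA := qf (Am g') (y A); set QB := qf (\sum_c s c *: Xm g' c) (y A).
  move=> qa qb.
  case: (posnP m) => [m0|mpos].
    have y0 : y A = 0.
      by apply/matrixP => i [j hj]; exfalso; move: hj; rewrite m0.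
    move: qa qb; rewrite /QA /QB y0 !qf0 mulr0 => qa qb.
    have -> : Val P Pi w A = 0 by lra.
    have -> : Val P Pi' w' A = 0 by lra.
    by rewrite !mulr0.
  have QA0 : 0 <= QA by rewrite /QA /Am; apply: psd_gram.
  have ek : 4 < eps * kk.
    have h1 : 4 / eps < kk.
      apply: lt_le_trans (truncnS_gt (4 / eps)) _.
      by rewrite /kk ler_nat /k ltnS leqW // leqnSn.
    by rewrite -(ltr_pdivrMl _ _ e0) mulrC.
  have [pb1 pb2] := param_bounds kk3 ek.
  have [hs1 hs2] := hs (y A).
  have mm0 : 0 < mm by rewrite /mm ltr0n.
  have sigE : sig = 2 / (mm * (lo + hi)) by rewrite /sig mpos.
  have e_lo : sig * (m%:R * k%:R * (k%:R - 1) * QA) = 2 * lo / (lo + hi) * QA.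
    rewrite sigE -/mm -/kk /lo; field; rewrite !gt_eqF //.
  have e_hi : sig * (m%:R * (k%:R + 1) * (k%:R + 4) * QA) = 2 * hi / (lo + hi) * QA.
    rewrite sigE -/mm -/kk /hi; field; rewrite !gt_eqF //.
  have l1 := ler_wpM2l (ltW sig0) hs1.
  have l2 := ler_wpM2l (ltW sig0) hs2.
  rewrite e_lo in l1; rewrite e_hi in l2.
  have l3 : (1 - eps) * QA <= 2 * lo / (lo + hi) * QA by rewrite ler_wpM2r.
  have l4 : 2 * hi / (lo + hi) * QA <= (1 + eps) * QA by rewrite ler_wpM2r.
  have H1 := le_trans l3 l1; have H2 := le_trans l2 l4.
  rewrite qb qa mulrCA ler_pM2l // in H1.
  rewrite qb qa mulrCA ler_pM2l // in H2.
have sub : Pi' \subset [set i | s i != 0].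
  by apply/subsetP => c; rewrite !inE => /andP [].
have c1 : (#|Pi'| <= k * k * (#|V| * #|D|))%N.
  apply: leq_trans (subset_leq_card sub) _; apply: leq_trans sc _.
  by rewrite leq_mul2l; apply/orP; right; move: mN; rewrite /NN card_prod.
have c2 : #|Pi'|%:R <= kk * kk * (#|V|%:R * #|D|%:R).
  by rewrite /kk -!natrM ler_nat.
have kb : kk * eps <= 7.
  have t1 : (Num.truncn (4 / eps))%:R <= 4 / eps.
    by rewrite truncn_le divr_ge0 // ltW.
  have -> : kk = (Num.truncn (4 / eps))%:R + 3 by rewrite /kk /k -addn3 natrD.
  have t2 : (Num.truncn (4 / eps))%:R * eps <= 4 / eps * eps by rewrite ler_pM2r.
  have t3 : 4 / eps * eps = 4 by rewrite divfK ?gt_eqF.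
  rewrite mulrDl; lra.
have kk0 : 0 <= kk * eps by apply: mulr_ge0; [lra| exact: ltW].
have kb2 : kk * kk * eps ^+ 2 <= 49.
  have -> : kk * kk * eps ^+ 2 = (kk * eps) * (kk * eps) by ring.
  apply: (le_trans (ler_pM kk0 kk0 kb kb)).
  by rewrite le_eqVlt; apply/orP; left; apply/eqP; rewrite -natrM.
have VD0 : 0 <= #|V|%:R * #|D|%:R :> R by apply: mulr_ge0; apply: ler0n.
rewrite ler_pdivlMr; last by apply: exprn_gt0.
have h1 : #|Pi'|%:R * eps ^+ 2 <= kk * kk * (#|V|%:R * #|D|%:R) * eps ^+ 2.
  by rewrite ler_pM2r // exprn_gt0.
have h2 : kk * kk * (#|V|%:R * #|D|%:R) * eps ^+ 2 = (kk * kk * eps ^+ 2) * (#|V|%:R * #|D|%:R).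
  by ring.
have h3 : (kk * kk * eps ^+ 2) * (#|V|%:R * #|D|%:R) <= 49 * (#|V|%:R * #|D|%:R).
  by rewrite ler_wpM2r.
have h4 : 49 * (#|V|%:R * #|D|%:R) <= (49 * #|D|.+1)%:R * #|V|%:R :> R.
  rewrite natrM -mulrA ler_wpM2l // mulrC ler_wpM2r ?ler0n // ler_nat.
  exact: leqnSn.
lra.
Qed.
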